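(* In the setting described in the context, $\frac{qAK^*-q^{-1}K^*A}{q-q^{-1}}=aI$, $\frac{qK^{*-1}B-q^{-1}BK^{*-1}}{q-q^{-1}}=bI$, $\frac{qA^*K^{*-1}-q^{-1}K^{*-1}A^*}{q-q^{-1}}=a^*I$, $\frac{qK^*B^*-q^{-1}B^*K^*}{q-q^{-1}}=b^*I$.
   Context: $\mathbb K$ is an algebraically closed field, $q\in\mathbb K$ nonzero and not a root of unity, $V$ a nonzero finite-dimensional $\mathbb K$-vector space. A tridiagonal pair on $V$ is an ordered pair $A,A^*$ of linear maps $V\to V$ such that: (i) each of $A,A^*$ is diagonalizable; (ii) there is an ordering $V_0,\dots,V_d$ of the eigenspaces of $A$ with $A^*V_i\subseteq V_{i-1}+V_i+V_{i+1}$ ($V_{-1}=V_{d+1}=0$); (iii) there is an ordering $V^*_0,\dots,V^*_\delta$ of the eigenspaces of $A^*$ with $AV^*_i\subseteq V^*_{i-1}+V^*_i+V^*_{i+1}$ ($V^*_{-1}=V^*_{\delta+1}=0$); (iv) no subspace $W\ne0,V$ satisfies $AW\subseteq W$, $A^*W\subseteq W$. It is known $d=\delta$; orderings as in (ii),(iii) are called standard. Setting: $A,A^*$ is a tridiagonal pair on $V$; $V_0,\dots,V_d$ (resp. $V^*_0,\dots,V^*_d$) is a standard ordering of the eigenspaces of $A$ (resp. $A^*$); the eigenvalue of $A$ on $V_i$ is $aq^{2i-d}$ and that of $A^*$ on $V^*_i$ is $a^*q^{d-2i}$ for some nonzero $a,a^*\in\mathbb K$; $b,b^*\in\mathbb K$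 are nonzero. For $0\le i\le d$, each of the following three families of subspaces forms a decomposition of $V$ (nonzero subspaces, direct sum equal to $V$): $(V^*_0+\cdots+V^*_i)\cap(V_0+\cdots+V_{d-i})$; $(V^*_{d-i}+\cdots+V^*_d)\cap(V_i+\cdots+V_d)$; $(V^*_{d-i}+\cdots+V^*_d)\cap(V_0+\cdots+V_{d-i})$. $B$ is the linear map acting as $bq^{2i-d}I$ on $(V^*_0+\cdots+V^*_i)\cap(V_0+\cdots+V_{d-i})$; $B^*$ acts as $b^*q^{d-2i}I$ on $(V^*_{d-i}+\cdots+V^*_d)\cap(V_i+\cdots+V_d)$; $K^*$ acts as $q^{2i-d}I$ on $(V^*_{d-i}+\cdots+V^*_d)\cap(V_0+\cdots+V_{d-i})$ (for each $0\le i\le d$). *)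

(* Defs.v *)
From HB Require Import structures.
From mathcomp Require Import all_boot all_order all_algebra.
Set Implicit Arguments. Unset Strict Implicit. Unset Printing Implicit Defensive.
Import Order.TTheory GRing.Theory Num.Theory.
Local Open Scope ring_scope.
Local Open Scope vspace_scope.

Section TD.
Variables (K : fieldType) (V : vectType K).

Definition diagonalizable (f : 'End(V)) : Prop :=
  exists s : seq K, (\sum_(c <- s) passmx.leigenspace f c)%VS = fullv.

Definition eig_ordering (f : 'End(V)) (d : nat) (th : nat -> K)
    (Vs : nat -> {vspace V}) : Prop :=
  [/\ (forall i j, (i <= d)%N -> (j <= d)%N -> th i = th j -> i = j),
      (forall i, (i <= d)%N -> Vs i = passmx.leigenspace f (th i) /\ Vs i != 0%VS) &
      (forall c, passmx.leigenspace f c != 0%VS -> exists2 i, (i <= d)%N & c = th i)].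

Definition tridiag (g : 'End(V)) (d : nat) (Ws : nat -> {vspace V}) : Prop :=
  forall i, (i <= d)%N ->
    (g @: Ws i <= (if (0 < i)%N then Ws i.-1 else 0%VS) + Ws i
                  + (if (i < d)%N then Ws i.+1 else 0%VS))%VS.

Definition TDpair (A As : 'End(V)) : Prop :=
  [/\ diagonalizable A, diagonalizable As,
      (exists d th Vs, eig_ordering A d th Vs /\ tridiag As d Vs),
      (exists d th Vs, eig_ordering As d th Vs /\ tridiag A d Vs) &
      (forall W : {vspace V}, (A @: W <= W)%VS -> (As @: W <= W)%VS ->
         W = 0%VS \/ W = fullv)].

Definition decomposition (d : nat) (W : nat -> {vspace V}) : Prop :=
  [/\ (forall i, (i <= d)%N -> W i != 0%VS),
      directv (\sum_(i < d.+1) W i) &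
      (\sum_(i < d.+1) W i)%VS = fullv].

End TD.

(* Main.v *)
Require Import Defs.
From HB Require Import structures.
From mathcomp Require Import all_boot all_order all_algebra zify ring.
Import Order.TTheory GRing.Theory Num.Theory.
Local Open Scope ring_scope.
Set Implicit Arguments. Unset Strict Implicit. Unset Printing Implicit Defensive.

Section Main.
Variables (K : fieldType) (q : K) (V : vectType K) (A As Ks : 'End(V)) (d : nat)
  (Vi Vsi : nat -> {vspace V}) (a as_ : K).
Hypotheses (hq0 : q != 0) (hqn : forall n : nat, (0 < n)%N -> q ^+ n != 1).
Hypotheses (eA : eig_ordering A d (fun i => a * q ^ ((2 * i)%:Z - d%:Z)) Vi)
  (tAs : tridiag As d Vi)
  (eAs : eig_ordering As d (fun i => as_ * q ^ (d%:Z - (2 * i)%:Z)) Vsi)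
  (tA : tridiag A d Vsi) (ha : a != 0) (has : as_ != 0).

Definition Lt (X : nat -> {vspace V}) k := (\sum_(j < d.+1 | (j < k)%N) X j)%VS.
Definition Ge (X : nat -> {vspace V}) m := (\sum_(j < d.+1 | (m <= j)%N) X j)%VS.

Lemma subLt (X : nat -> {vspace V}) k j : (j <= d)%N -> (j < k)%N -> (X j <= Lt X k)%VS.
Proof.
move=> hj hjk; have hj' : (j < d.+1)%N by [].
exact: (@sumv_sup _ _ _ (Ordinal hj') (fun j : 'I_d.+1 => (j < k)%N) (X j) (fun j : 'I_d.+1 => X j)).
Qed.

Lemma subGe (X : nat -> {vspace V}) m j : (j <= d)%N -> (m <= j)%N -> (X j <= Ge X m)%VS.
Proof.
move=> hj hjk; have hj' : (j < d.+1)%N by [].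
exact: (@sumv_sup _ _ _ (Ordinal hj') (fun j : 'I_d.+1 => (m <= j)%N) (X j) (fun j : 'I_d.+1 => X j)).
Qed.

Lemma inLt (X : nat -> {vspace V}) k j u : (j <= d)%N -> (j < k)%N -> u \in X j -> u \in Lt X k.
Proof. by move=> hj hjk; apply/subvP/subLt. Qed.

Lemma inGe (X : nat -> {vspace V}) m j u : (j <= d)%N -> (m <= j)%N -> u \in X j -> u \in Ge X m.
Proof. by move=> hj hjk; apply/subvP/subGe. Qed.

Lemma Lt_mono (X : nat -> {vspace V}) k k' : (k <= k')%N -> (Lt X k <= Lt X k')%VS.
Proof.
move=> hk; apply/subv_sumP => j hj; apply: subLt; first by rewrite -ltnS.
exact: leq_trans hj hk.
Qed.

Lemma Ge_mono (X : nat -> {vspace V}) m m' : (m' <= m)%N -> (Ge X m <= Ge X m')%VS.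
Proof.
move=> hk; apply/subv_sumP => j hj; apply: subGe; first by rewrite -ltnS.
exact: leq_trans hk hj.
Qed.

Lemma Lt0 (X : nat -> {vspace V}) v : v \in Lt X 0 -> v = 0.
Proof. by rewrite /Lt big_pred0 // memv0 => /eqP. Qed.

Lemma GeS (X : nat -> {vspace V}) v : v \in Ge X d.+1 -> v = 0.
Proof.
rewrite /Ge big_pred0 ?memv0 => [/eqP //|j /=].
by apply/negbTE; rewrite -ltnNge.
Qed.

Lemma Lt_dec (X : nat -> {vspace V}) k v : v \in Lt X k ->
  exists2 w : 'I_d.+1 -> V, (forall j : 'I_d.+1, (j < k)%N -> w j \in X j) &
     v = \sum_(j < d.+1 | (j < k)%N) w j.
Proof. by case/memv_sumP => w h1 h2; exists w. Qed.

Lemma Ge_dec (X : nat -> {vspace V}) m v : v \in Ge X m ->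
  exists2 w : 'I_d.+1 -> V, (forall j : 'I_d.+1, (m <= j)%N -> w j \in X j) &
     v = \sum_(j < d.+1 | (m <= j)%N) w j.
Proof. by case/memv_sumP => w h1 h2; exists w. Qed.

Lemma tri_Ge (f : 'End(V)) (X : nat -> {vspace V}) j u : tridiag f d X -> (j <= d)%N -> u \in X j ->
  f u \in Ge X j.-1.
Proof.
move=> ht hj hu; have := ht j hj; move/subvP/(_ _ (memv_img f hu)); apply/subvP.
rewrite !subv_add; apply/andP; split; first (apply/andP; split).
- case: ifP => h; last exact: sub0v. by apply: subGe => //; lia.
- by apply: subGe => //; lia.
- case: ifP => h; last exact: sub0v. by apply: subGe => //; lia.
Qed.

Lemma tri_Lt (f : 'End(V)) (X : nat -> {vspace V}) j u : tridiag f d X -> (j <= d)%N -> u \in X j ->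
  f u \in Lt X j.+2.
Proof.
move=> ht hj hu; have := ht j hj; move/subvP/(_ _ (memv_img f hu)); apply/subvP.
rewrite !subv_add; apply/andP; split; first (apply/andP; split).
- case: ifP => h; last exact: sub0v. by apply: subLt => //; lia.
- by apply: subLt => //; lia.
- case: ifP => h; last exact: sub0v. by apply: subLt => //; lia.
Qed.


Lemma fZ (f : 'End(V)) c x : f (c *: x) = c *: f x.
Proof. exact: linearZ. Qed.
Lemma fD (f : 'End(V)) x y : f (x + y) = f x + f y.
Proof. exact: linearD. Qed.
Lemma fB (f : 'End(V)) x y : f (x - y) = f x - f y.
Proof. exact: linearB. Qed.
Lemma f0 (f : 'End(V)) : f 0 = 0.
Proof. exact: linear0. Qed.
Lemma fsum (f : 'End(V)) (I : finType) (P : pred I) (w : I -> V) :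
  f (\sum_(j | P j) w j) = \sum_(j | P j) f (w j).
Proof. exact: linear_sum. Qed.

Lemma e_ne0 (z : int) : q ^ z != 0.
Proof. exact: expfz_neq0. Qed.

Lemma eS (z : int) : q ^ (z + 2%:Z) = q * q * q ^ z.
Proof. by rewrite expfzDr // mulrC. Qed.

Lemma eN (z : int) : q ^ (- z) = (q ^ z)^-1.
Proof. by rewrite invr_expz. Qed.

Lemma e_inj (z w : int) : q ^ z = q ^ w -> z = w.
Proof.
move=> h; apply/eqP; rewrite -subr_eq0; apply/negP => hn.
have h1 : q ^ (z - w) = 1.
  by rewrite expfzDr // h -expfzDr // subrr.
move: hn h1; case: (z - w) => [n|n] hn h1.
  have hn0 : (0 < n)%N by case: n hn {h1}.
  have h2 : q ^+ n = 1 := h1. by move: (hqn hn0); rewrite h2 eqxx.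
move: h1; rewrite NegzE -exprnN => /eqP; rewrite invr_eq1 => /eqP h1.
by move: (@hqn n.+1 isT); rewrite h1 eqxx.
Qed.

Lemma eig_val (f : 'End(V)) th (X : nat -> {vspace V}) j u :
  eig_ordering f d th X -> (j <= d)%N -> u \in X j -> f u = th j *: u.
Proof.
case=> _ h _ hj; rewrite (h j hj).1 /passmx.leigenspace memv_ker.
rewrite add_lfunE opp_lfunE scale_lfunE id_lfunE subr_eq0 => /eqP //.
Qed.

Lemma eig_in (f : 'End(V)) th (X : nat -> {vspace V}) j u c :
  eig_ordering f d th X -> (j <= d)%N -> c = th j -> f u = c *: u -> u \in X j.
Proof.
case=> _ h _ hj -> hu; rewrite (h j hj).1 /passmx.leigenspace memv_ker.
by rewrite add_lfunE opp_lfunE scale_lfunE id_lfunE hu subrr.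
Qed.

Lemma eig_no (f : 'End(V)) th (X : nat -> {vspace V}) u c :
  eig_ordering f d th X -> (forall i, (i <= d)%N -> c != th i) -> f u = c *: u -> u = 0.
Proof.
case=> _ _ h hc hu; apply/eqP; apply/negP => hu0.
have : passmx.leigenspace f c != 0%VS.
  apply/negP => /eqP h0.
  have : u \in passmx.leigenspace f c.
    by rewrite /passmx.leigenspace memv_ker add_lfunE opp_lfunE scale_lfunE id_lfunE hu subrr.
  by rewrite h0 memv0 => /eqP hu1; apply: hu0; rewrite hu1.
by case/h => i hi hci; move: (hc i hi); rewrite hci eqxx.
Qed.


Lemma comb (v y : V) (c s1 s2 a1 a2 b1 b2 g : K) :
  c * (s1 * a1 - s2 * b1) = g -> s1 * a2 - s2 * b2 = 0 ->
  c *: (s1 *: (a1 *: v + a2 *: y) - s2 *: (b1 *: v + b2 *: y)) = g *: v.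
Proof.
move=> h1 h2.
have -> : s1 *: (a1 *: v + a2 *: y) - s2 *: (b1 *: v + b2 *: y) =
  (s1 * a1 - s2 * b1) *: v + (s1 * a2 - s2 * b2) *: y.
  by rewrite !scalerDr !scalerA opprD addrACA -!scalerBl.
by rewrite h2 scale0r addr0 scalerA h1.
Qed.

Lemma finE (X v y : V) (c a1 b1 a2 b2 g : K) :
  X = (a1 *: v + b1 *: y) - (a2 *: v + b2 *: y) -> c * (a1 - a2) = g -> b1 - b2 = 0 ->
  c *: X = g *: v.
Proof.
move=> -> h1 h2; rewrite opprD addrACA -!scalerBl h2 scale0r addr0.
by rewrite scalerA h1.
Qed.

Lemma qq_ne0 : q - q^-1 != 0.
Proof.
apply/negP => /eqP h; move: (@hqn 2 isT); rewrite expr2.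
have h1 : q = q^-1 by apply/eqP; rewrite -subr_eq0 h.
have -> : q * q = 1 by rewrite {2}h1 mulfV.
by rewrite eqxx.
Qed.

Lemma qq1 : q * q - 1 != 0.
Proof. by rewrite subr_eq0 -expr2; exact: (@hqn 2 isT). Qed.

Hypothesis hK : forall i v, (i <= d)%N -> v \in Ge Vsi (d - i) -> v \in Lt Vi (d - i).+1 ->
  Ks v = q ^ ((2 * i)%:Z - d%:Z) *: v.

Lemma step1 i v : (i <= d)%N -> v \in Ge Vsi (d - i) -> v \in Lt Vi (d - i).+1 ->
  let y := A v - (a * q ^ ((2 * (d - i))%:Z - d%:Z)) *: v in
  y \in Ge Vsi (d - i).-1 /\ y \in Lt Vi (d - i).
Proof.
move=> hi hv1 hv2 y; split.
- case: (Ge_dec hv1) => w hw hv; rewrite /y hv linear_sum scaler_sumr -sumrB.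
  apply: memv_suml => j hj; apply: memvB.
    have hm : ((d - i).-1 <= j.-1)%N by lia.
    exact: (subvP (Ge_mono Vsi hm)) _ (tri_Ge tA (ltn_ord j) (hw j hj)).
  by apply: memvZ; apply: (inGe (ltn_ord j) _ (hw j hj)); lia.
- case: (Lt_dec hv2) => w hw hv; rewrite /y hv linear_sum scaler_sumr -sumrB.
  apply: memv_suml => j hj; rewrite -[X in X - _]/(A (w j)) (eig_val eA (ltn_ord j) (hw j hj)).
  rewrite -scalerBl; case: (ltnP j (d - i)) => hjk.
    by apply: memvZ; apply: (inLt (ltn_ord j) _ (hw j hj)); lia.
  have -> : nat_of_ord j = (d - i)%N by lia.
  by rewrite subrr scale0r mem0v.
Qed.

Lemma piece1 i v : (i <= d)%N -> v \in Ge Vsi (d - i) -> v \in Lt Vi (d - i).+1 ->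
  (q - q^-1)^-1 *: (q *: A (Ks v) - q^-1 *: Ks (A v)) = a *: v.
Proof.
move=> hi hv1 hv2; have [hy1 hy2] := step1 hi hv1 hv2.
set y := A v - _ *: v in hy1 hy2.
set t := q ^ ((2 * i)%:Z - d%:Z).
have ht : t != 0 by exact: e_ne0.
have Ky : Ks y = (q * q * t) *: y.
  case: (ltnP i d) => hid.
    rewrite (hK (i := i.+1)) //; last first.
      + by have -> : (d - i.+1).+1 = (d - i)%N by lia.
      + by have -> : (d - i.+1)%N = (d - i).-1 by lia.
    by rewrite -eS; congr (q ^ _ *: _); lia.
  have hd : (d - i = 0)%N by lia.
  by move: hy2; rewrite hd => /Lt0 ->; rewrite linear0 scaler0.
have Av : A v = (a * t^-1) *: v + y.
  have -> : a * t^-1 = a * q ^ ((2 * (d - i))%:Z - d%:Z) by rewrite -eN; congr (_ * q ^ _); lia.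
  by rewrite /y [_ + (_ - _)]addrC subrK.
rewrite (hK hi hv1 hv2) fZ Av fD fZ (hK hi hv1 hv2) Ky.
rewrite -/t; clearbody y t; apply: finE; first by rewrite !scalerDr !scalerA.
  by field; rewrite ht hq0 qq1.
by field.
Qed.


Hypothesis KiK : forall x, (Ks^-1)%VF (Ks x) = x.
Hypothesis KKi : forall x, Ks ((Ks^-1)%VF x) = x.

Lemma Ki_piece i v : (i <= d)%N -> v \in Ge Vsi (d - i) -> v \in Lt Vi (d - i).+1 ->
  (Ks^-1)%VF v = (q ^ ((2 * i)%:Z - d%:Z))^-1 *: v.
Proof.
move=> hi hv1 hv2; have := KiK v; rewrite (hK hi hv1 hv2) fZ => h.
by rewrite -{2}h scalerA mulVf ?scale1r // e_ne0.
Qed.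

Lemma step3 i v : (i <= d)%N -> v \in Ge Vsi (d - i) -> v \in Lt Vi (d - i).+1 ->
  let y := As v - (as_ * q ^ (d%:Z - (2 * (d - i))%:Z)) *: v in
  y \in Ge Vsi (d - i).+1 /\ y \in Lt Vi (d - i).+2.
Proof.
move=> hi hv1 hv2 y; split.
- case: (Ge_dec hv1) => w hw hv; rewrite /y hv fsum scaler_sumr -sumrB.
  apply: memv_suml => j hj; rewrite (eig_val eAs (ltn_ord j) (hw j hj)).
  rewrite -scalerBl; case: (ltnP (d - i) j) => hjk.
    by apply: memvZ; apply: (inGe (ltn_ord j) _ (hw j hj)); lia.
  have -> : nat_of_ord j = (d - i)%N by lia.
  by rewrite subrr scale0r mem0v.
- case: (Lt_dec hv2) => w hw hv; rewrite /y hv fsum scaler_sumr -sumrB.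
  apply: memv_suml => j hj; apply: memvB.
    have hm : (j.+2 <= (d - i).+2)%N by lia.
    exact: (subvP (Lt_mono Vi hm)) _ (tri_Lt tAs (ltn_ord j) (hw j hj)).
  by apply: memvZ; apply: (inLt (ltn_ord j) _ (hw j hj)); lia.
Qed.

Lemma piece3 i v : (i <= d)%N -> v \in Ge Vsi (d - i) -> v \in Lt Vi (d - i).+1 ->
  (q - q^-1)^-1 *: (q *: As ((Ks^-1)%VF v) - q^-1 *: (Ks^-1)%VF (As v)) = as_ *: v.
Proof.
move=> hi hv1 hv2; have [hy1 hy2] := step3 hi hv1 hv2.
set y := As v - _ *: v in hy1 hy2.
set t := q ^ ((2 * i)%:Z - d%:Z).
have ht : t != 0 by exact: e_ne0.
have Ky : (Ks^-1)%VF y = (q * q / t) *: y.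
  case: (posnP i) => hi0; last first.
    rewrite (Ki_piece (i := i.-1)); last first.
      + by have -> : (d - i.-1).+1 = (d - i).+2 by lia.
      + by have -> : (d - i.-1)%N = (d - i).+1 by lia.
      + lia.
    set s := q ^ _.
    have hs : t = q * q * s by rewrite /t /s -eS; congr (q ^ _); lia.
    have hs0 : s != 0 by exact: e_ne0.
    by rewrite hs; congr (_ *: _); field; rewrite hq0 hs0.
  have hd : ((d - i).+1 = d.+1)%N by lia.
  by move: hy1; rewrite hd => /GeS ->; rewrite f0 scaler0.
have Av : As v = (as_ * t) *: v + y.
  have -> : as_ * t = as_ * q ^ (d%:Z - (2 * (d - i))%:Z) by congr (_ * q ^ _); lia.
  by rewrite /y [_ + (_ - _)]addrC subrK.
rewrite (Ki_piece hi hv1 hv2) fZ Av fD fZ (Ki_piece hi hv1 hv2) Ky.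
rewrite -/t; clearbody y t; apply: finE; first by rewrite !scalerDr !scalerA.
  by field; rewrite ht hq0 qq1.
by field; rewrite ht hq0.
Qed.


Lemma gen_shift (f L : 'End(V)) (al s : K) u : s != 0 ->
  f u = (al * s) *: u ->
  (q - q^-1)^-1 *: (q *: f (L u) - q^-1 *: L (f u)) = al *: u ->
  f (L u - s^-1 *: u) = (q^-1 * q^-1 * (al * s)) *: (L u - s^-1 *: u).
Proof.
move=> hs hf hid; rewrite fB fZ hf scalerA.
move: hid; rewrite hf fZ; set X := f (L u); set Y := L u => hid.
have hc : (q - q^-1) != 0 := qq_ne0.
have hX : X = (q^-1 * (q - q^-1) * al) *: u + (q^-1 * q^-1 * (al * s)) *: Y.
  have h2 : q *: X - q^-1 *: ((al * s) *: Y) = ((q - q^-1) * al) *: u.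
    by rewrite -[RHS]scalerA -hid [RHS]scalerA mulfV ?scale1r.
  have h3 : q *: X = ((q - q^-1) * al) *: u + (q^-1 * (al * s)) *: Y.
    by rewrite -h2 scalerA subrK.
  by rewrite -[X](scalerK hq0) h3 scalerDr !scalerA !mulrA.
rewrite hX addrAC -scalerBl [RHS]scalerBr [RHS]addrC [in RHS]scalerA -scaleNr.
by congr (_ *: _ + _); field; rewrite hq0 hs.
Qed.

Lemma eM2 (al : K) (z : int) : q^-1 * q^-1 * (al * q ^ z) = al * q ^ (z - 2%:Z).
Proof.
have -> : q ^ z = q * q * q ^ (z - 2%:Z) by rewrite -eS subrK.
by field.
Qed.

Hypothesis id1 : forall v, (q - q^-1)^-1 *: (q *: A (Ks v) - q^-1 *: Ks (A v)) = a *: v.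
Hypothesis id3 : forall v,
  (q - q^-1)^-1 *: (q *: As ((Ks^-1)%VF v) - q^-1 *: (Ks^-1)%VF (As v)) = as_ *: v.

Lemma K1 j u : (j <= d)%N -> u \in Vi j ->
  let z := Ks u - (q ^ ((2 * j)%:Z - d%:Z))^-1 *: u in
  z \in Lt Vi j /\ z \in Ge Vi j.-1.
Proof.
move=> hj hu z.
have hA := eig_val eA hj hu.
have := gen_shift (L:=Ks) (e_ne0 ((2 * j)%:Z - d%:Z)) hA (id1 u); rewrite -/z eM2 => hz.
case: (posnP j) => hj0.
  have -> : z = 0.
    apply: (eig_no eA _ hz) => i hi; apply/negP => /eqP /(mulfI ha) /e_inj; lia.
  by rewrite !mem0v.
have hz' : z \in Vi j.-1.
  by apply: (eig_in eA _ _ hz) => //; [lia | congr (_ * q ^ _); lia].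
by split; [apply: (inLt _ _ hz') | apply: (inGe _ _ hz')]; lia.
Qed.

Lemma K3 j u : (j <= d)%N -> u \in Vsi j ->
  let z := (Ks^-1)%VF u - (q ^ (d%:Z - (2 * j)%:Z))^-1 *: u in
  z \in Ge Vsi j.+1 /\ z \in Lt Vsi j.+2.
Proof.
move=> hj hu z.
have hA := eig_val eAs hj hu.
have := gen_shift (L:=(Ks^-1)%VF) (e_ne0 (d%:Z - (2 * j)%:Z)) hA (id3 u); rewrite -/z eM2 => hz.
case: (ltnP j d) => hjd; last first.
  have -> : z = 0.
    apply: (eig_no eAs _ hz) => i hi; apply/negP => /eqP /(mulfI has) /e_inj; lia.
  by rewrite !mem0v.
have hz' : z \in Vsi j.+1.
  by apply: (eig_in eAs _ _ hz) => //; congr (_ * q ^ _); lia.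
by split; [apply: (inGe _ _ hz') | apply: (inLt _ _ hz')]; lia.
Qed.


Lemma pres (f g : 'End(V)) (U : {vspace V}) : (forall x, g (f x) = x) ->
  (forall x, x \in U -> f x \in U) -> forall w, w \in U -> g w \in U.
Proof.
move=> hgf hfU w hw.
have hinj : lker f == 0%VS by apply/lker0P; exact: (can_inj hgf).
have hsub : (f @: U <= U)%VS by apply/subvP => _ /memv_imgP [x hx ->]; exact: hfU.
have hdim : \dim (f @: U) = \dim U by apply: limg_dim_eq; rewrite (eqP hinj) capv0.
have hEq : (f @: U)%VS = U by apply/eqP; rewrite eqEdim hsub hdim leqnn.
move: hw; rewrite -{1}hEq => /memv_imgP [x hx ->]; by rewrite hgf.
Qed.

Lemma inv_swap (f g : 'End(V)) (s : K) w : s != 0 -> (forall x, g (f x) = x) ->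
  g w - s *: w = (- s) *: g (f w - s^-1 *: w).
Proof.
move=> hs hgf; rewrite fB fZ hgf scalerBr scalerA mulNr mulfV // scaleN1r.
by rewrite scaleNr opprK addrC.
Qed.

Lemma presLtVi k x : x \in Lt Vi k -> Ks x \in Lt Vi k.
Proof.
case/Lt_dec => w hw ->; rewrite fsum; apply: memv_suml => j hj.
have [h1 _] := K1 (ltn_ord j) (hw j hj).
have -> : Ks (w j) = (Ks (w j) - (q ^ ((2 * j)%:Z - d%:Z))^-1 *: w j)
   + (q ^ ((2 * j)%:Z - d%:Z))^-1 *: w j by rewrite subrK.
apply: memvD; first exact: (subvP (Lt_mono Vi (ltnW hj))).
by apply: memvZ; apply: (inLt (ltn_ord j) hj (hw j hj)).
Qed.

Lemma presGeVi m x : x \in Ge Vi m -> Ks x \in Ge Vi m.-1.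
Proof.
case/Ge_dec => w hw ->; rewrite fsum; apply: memv_suml => j hj.
have [_ h2] := K1 (ltn_ord j) (hw j hj).
have -> : Ks (w j) = (Ks (w j) - (q ^ ((2 * j)%:Z - d%:Z))^-1 *: w j)
   + (q ^ ((2 * j)%:Z - d%:Z))^-1 *: w j by rewrite subrK.
apply: memvD; first by apply: (subvP (Ge_mono Vi _)) h2; lia.
by apply: memvZ; apply: (inGe (ltn_ord j) _ (hw j hj)); lia.
Qed.

Lemma presGeVsi m x : x \in Ge Vsi m -> (Ks^-1)%VF x \in Ge Vsi m.
Proof.
case/Ge_dec => w hw ->; rewrite fsum; apply: memv_suml => j hj.
have [h1 _] := K3 (ltn_ord j) (hw j hj).
have -> : (Ks^-1)%VF (w j) = ((Ks^-1)%VF (w j) - (q ^ (d%:Z - (2 * j)%:Z))^-1 *: w j)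
   + (q ^ (d%:Z - (2 * j)%:Z))^-1 *: w j by rewrite subrK.
apply: memvD; first by apply: (subvP (Ge_mono Vsi _)) h1; lia.
by apply: memvZ; apply: (inGe (ltn_ord j) hj (hw j hj)).
Qed.

Lemma presLtVsi k x : x \in Lt Vsi k -> (Ks^-1)%VF x \in Lt Vsi k.+1.
Proof.
case/Lt_dec => w hw ->; rewrite fsum; apply: memv_suml => j hj.
have [_ h2] := K3 (ltn_ord j) (hw j hj).
have -> : (Ks^-1)%VF (w j) = ((Ks^-1)%VF (w j) - (q ^ (d%:Z - (2 * j)%:Z))^-1 *: w j)
   + (q ^ (d%:Z - (2 * j)%:Z))^-1 *: w j by rewrite subrK.
apply: memvD; first by apply: (subvP (Lt_mono Vsi _)) h2; lia.
by apply: memvZ; apply: (inLt (ltn_ord j) _ (hw j hj)); lia.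
Qed.

Lemma KiLtVi k x : x \in Lt Vi k -> (Ks^-1)%VF x \in Lt Vi k.
Proof. exact: (pres KiK (@presLtVi k)). Qed.

Lemma KGeVsi m x : x \in Ge Vsi m -> Ks x \in Ge Vsi m.
Proof. exact: (pres KKi (@presGeVsi m)). Qed.

Lemma K1g k v : (k <= d)%N -> v \in Lt Vi k.+1 ->
  (Ks^-1)%VF v - q ^ ((2 * k)%:Z - d%:Z) *: v \in Lt Vi k.
Proof.
move=> hk /Lt_dec [w hw ->]; rewrite fsum scaler_sumr -sumrB.
apply: memv_suml => j hj; case: (ltnP j k) => hjk.
  by apply: memvB; [apply: KiLtVi | apply: memvZ]; apply: (inLt (ltn_ord j) hjk (hw j hj)).
have ejk : nat_of_ord j = k by lia.
have [h1 _] := K1 (ltn_ord j) (hw j hj).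
rewrite (inv_swap _ (e_ne0 ((2 * k)%:Z - d%:Z)) KiK); apply: memvZ; apply: KiLtVi.
by rewrite -ejk.
Qed.

Lemma K3g m v : (m <= d)%N -> v \in Ge Vsi m ->
  Ks v - q ^ (d%:Z - (2 * m)%:Z) *: v \in Ge Vsi m.+1.
Proof.
move=> hm /Ge_dec [w hw ->]; rewrite fsum scaler_sumr -sumrB.
apply: memv_suml => j hj; case: (ltnP m j) => hjk.
  by apply: memvB; [apply: KGeVsi | apply: memvZ]; apply: (inGe (ltn_ord j) hjk (hw j hj)).
have ejk : nat_of_ord j = m by lia.
have [h1 _] := K3 (ltn_ord j) (hw j hj).
rewrite (inv_swap _ (e_ne0 (d%:Z - (2 * m)%:Z)) KKi); apply: memvZ; apply: KGeVsi.
by rewrite -ejk.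
Qed.


Lemma piece2 (B : 'End(V)) (b : K)
  (hB : forall i v, (i <= d)%N -> v \in Lt Vsi i.+1 -> v \in Lt Vi (d - i).+1 ->
     B v = (b * q ^ ((2 * i)%:Z - d%:Z)) *: v) i v :
  (i <= d)%N -> v \in Lt Vsi i.+1 -> v \in Lt Vi (d - i).+1 ->
  (q - q^-1)^-1 *: (q *: (Ks^-1)%VF (B v) - q^-1 *: B ((Ks^-1)%VF v)) = b *: v.
Proof.
move=> hi hv1 hv2.
set t := q ^ ((2 * i)%:Z - d%:Z).
have ht : t != 0 by exact: e_ne0.
set y := (Ks^-1)%VF v - t^-1 *: v.
have hy1 : y \in Lt Vi (d - i).
  have e1 : q ^ ((2 * (d - i))%:Z - d%:Z) = t^-1 by rewrite -eN; congr (q ^ _); lia.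
  by have := K1g (leq_subr i d) hv2; rewrite e1.
have hy2 : y \in Lt Vsi i.+2.
  apply: memvB; first exact: presLtVsi.
  by apply: memvZ; apply: (subvP (Lt_mono Vsi (leqnSn _))).
have By : B y = (b * (q * q * t)) *: y.
  case: (ltnP i d) => hid.
    rewrite (hB i.+1 y) //; last first.
      by have -> : (d - i.+1).+1 = (d - i)%N by lia.
    by rewrite -eS; congr (_ * q ^ _ *: _); lia.
  have hd : (d - i = 0)%N by lia.
  by move: hy1; rewrite hd => /Lt0 ->; rewrite f0 scaler0.
have Kv : (Ks^-1)%VF v = t^-1 *: v + y by rewrite /y addrC subrK.
rewrite (hB _ _ hi hv1 hv2) fZ Kv fD fZ (hB _ _ hi hv1 hv2) By.
rewrite -/t; clearbody y t; apply: finE; first by rewrite !scalerDr !scalerA.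
  by field; rewrite ht hq0 qq1.
by field.
Qed.

Lemma piece4 (Bs : 'End(V)) (bs : K)
  (hBs : forall i v, (i <= d)%N -> v \in Ge Vsi (d - i) -> v \in Ge Vi i ->
     Bs v = (bs * q ^ (d%:Z - (2 * i)%:Z)) *: v) i v :
  (i <= d)%N -> v \in Ge Vsi (d - i) -> v \in Ge Vi i ->
  (q - q^-1)^-1 *: (q *: Ks (Bs v) - q^-1 *: Bs (Ks v)) = bs *: v.
Proof.
move=> hi hv1 hv2.
set s := q ^ (d%:Z - (2 * i)%:Z).
have hs : s != 0 by exact: e_ne0.
set y := Ks v - s^-1 *: v.
have hy1 : y \in Ge Vsi (d - i).+1.
  have e1 : q ^ (d%:Z - (2 * (d - i))%:Z) = s^-1 by rewrite -eN; congr (q ^ _); lia.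
  by have := K3g (leq_subr i d) hv1; rewrite e1.
have hy2 : y \in Ge Vi i.-1.
  apply: memvB; first exact: presGeVi.
  by apply: memvZ; apply: (subvP (Ge_mono Vi (leq_pred _))).
have By : Bs y = (bs * (q * q * s)) *: y.
  case: (posnP i) => hi0; last first.
    rewrite (hBs i.-1 y) //; last first.
      + by have -> : (d - i.-1)%N = (d - i).+1 by lia.
      + lia.
    by rewrite -eS; congr (_ * q ^ _ *: _); lia.
  have hd : ((d - i).+1 = d.+1)%N by lia.
  by move: hy1; rewrite hd => /GeS ->; rewrite f0 scaler0.
have Kv : Ks v = s^-1 *: v + y by rewrite /y addrC subrK.
rewrite (hBs _ _ hi hv1 hv2) fZ Kv fD fZ (hBs _ _ hi hv1 hv2) By.
rewrite -/s; clearbody y s; apply: finE; first by rewrite !scalerDr !scalerA.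
  by field; rewrite hs hq0 qq1.
by field.
Qed.

End Main.

Lemma ext_on (K : fieldType) (V : vectType K) n (W : nat -> {vspace V}) (f g : 'End(V)) :
  (\sum_(i < n) W i)%VS = fullv -> (forall i v, (i < n)%N -> v \in W i -> f v = g v) -> f = g.
Proof.
move=> hs h; apply/lfunP => v.
have : v \in (\sum_(i < n) W i)%VS by rewrite hs memvf.
case/memv_sumP => w hw ->; rewrite !fsum; apply: eq_bigr => i _.
exact: h (ltn_ord i) (hw i isT).
Qed.

Lemma opE (K : fieldType) (V : vectType K) (c s1 s2 : K) (F G : 'End(V)) v :
  (c *: (s1 *: F - s2 *: G)) v = c *: (s1 *: F v - s2 *: G v).
Proof. by rewrite scale_lfunE add_lfunE opp_lfunE !scale_lfunE. Qed.

Lemma idE (K : fieldType) (V : vectType K) (c : K) v : (c *: \1%VF : 'End(V)) v = c *: v.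
Proof. by rewrite scale_lfunE id_lfunE. Qed.

Theorem theorem10p2 (K : closedFieldType) (q : K) (V : vectType K)
  (A As B Bs Ks : 'End(V)) (d : nat) (Vi Vsi : nat -> {vspace V})
  (a as_ b bs : K) :
  q != 0 -> (forall n : nat, (0 < n)%N -> q ^+ n != 1) ->
  fullv != (0 : {vspace V})%VS ->
  TDpair A As ->
  eig_ordering A d (fun i => a * q ^ ((2 * i)%:Z - d%:Z)) Vi -> tridiag As d Vi ->
  eig_ordering As d (fun i => as_ * q ^ (d%:Z - (2 * i)%:Z)) Vsi -> tridiag A d Vsi ->
  a != 0 -> as_ != 0 -> b != 0 -> bs != 0 ->
  let W1 i := ((\sum_(j < i.+1) Vsi j) :&: (\sum_(j < (d - i).+1) Vi j))%VS in
  let W2 i := ((\sum_(d - i <= j < d.+1) Vsi j) :&: (\sum_(i <= j < d.+1) Vi j))%VS in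
  let W3 i := ((\sum_(d - i <= j < d.+1) Vsi j) :&: (\sum_(j < (d - i).+1) Vi j))%VS in
  decomposition d W1 -> decomposition d W2 -> decomposition d W3 ->
  (forall i v, (i <= d)%N -> v \in W1 i -> B v = (b * q ^ ((2 * i)%:Z - d%:Z)) *: v) ->
  (forall i v, (i <= d)%N -> v \in W2 i -> Bs v = (bs * q ^ (d%:Z - (2 * i)%:Z)) *: v) ->
  (forall i v, (i <= d)%N -> v \in W3 i -> Ks v = (q ^ ((2 * i)%:Z - d%:Z)) *: v) ->
  [/\ (q - q^-1)^-1 *: (q *: (A \o Ks)%VF - q^-1 *: (Ks \o A)%VF) = a *: \1%VF,
      (q - q^-1)^-1 *: (q *: (Ks^-1 \o B)%VF - q^-1 *: (B \o Ks^-1)%VF) = b *: \1%VF,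
      (q - q^-1)^-1 *: (q *: (As \o Ks^-1)%VF - q^-1 *: (Ks^-1 \o As)%VF) = as_ *: \1%VF &
      (q - q^-1)^-1 *: (q *: (Ks \o Bs)%VF - q^-1 *: (Bs \o Ks)%VF) = bs *: \1%VF].
Proof.
move=> hq0 hqn _ _ eA tAs eAs tA ha has _ _ W1 W2 W3 dW1 dW2 dW3 hB hBs hK.
have cLt : forall (X : nat -> {vspace V}) k, (k <= d.+1)%N ->
    (\sum_(j < k) X j)%VS = Lt d X k.
  by move=> X k hk; rewrite /Lt (big_ord_widen _ _ hk).
have cGe : forall (X : nat -> {vspace V}) m,
    (\sum_(m <= j < d.+1) X j)%VS = Ge d X m.
  by move=> X m; rewrite /Ge big_geq_mkord.
have W1E : forall i, (i <= d)%N -> W1 i = (Lt d Vsi i.+1 :&: Lt d Vi (d - i).+1)%VS.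
  by move=> i hi; rewrite /W1 !cLt //; lia.
have W2E : forall i, W2 i = (Ge d Vsi (d - i) :&: Ge d Vi i)%VS.
  by move=> i; rewrite /W2 !cGe.
have W3E : forall i, W3 i = (Ge d Vsi (d - i) :&: Lt d Vi (d - i).+1)%VS.
  by move=> i; rewrite /W3 cGe cLt //; lia.
have hK' : forall i v, (i <= d)%N -> v \in Ge d Vsi (d - i) -> v \in Lt d Vi (d - i).+1 ->
    Ks v = q ^ ((2 * i)%:Z - d%:Z) *: v.
  by move=> i v hi h1 h2; apply: hK => //; rewrite W3E memv_cap h1 h2.
have hB' : forall i v, (i <= d)%N -> v \in Lt d Vsi i.+1 -> v \in Lt d Vi (d - i).+1 ->
    B v = (b * q ^ ((2 * i)%:Z - d%:Z)) *: v.
  by move=> i v hi h1 h2; apply: hB => //; rewrite W1E // memv_cap h1 h2.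
have hBs' : forall i v, (i <= d)%N -> v \in Ge d Vsi (d - i) -> v \in Ge d Vi i ->
    Bs v = (bs * q ^ (d%:Z - (2 * i)%:Z)) *: v.
  by move=> i v hi h1 h2; apply: hBs => //; rewrite W2E memv_cap h1 h2.
case: dW3 => _ dir3 sum3.
case: dW1 => _ _ sum1.
case: dW2 => _ _ sum2.
have Kinj : forall v, Ks v = 0 -> v = 0.
  move=> v hv; have : v \in (\sum_(i < d.+1) W3 i)%VS by rewrite sum3 memvf.
  case/memv_sumP => w hw hvw.
  move/directv_sum_independent: dir3 => ind.
  have hKw : forall i : 'I_d.+1, Ks (w i) = q ^ ((2 * i)%:Z - d%:Z) *: w i.
    by move=> i; apply: hK (ltn_ord i) (hw i isT).
  have h0 : forall i : 'I_d.+1, true -> Ks (w i) = 0.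
    apply: ind.
      by move=> i _; rewrite hKw; apply: memvZ; exact: hw.
    by rewrite -fsum -hvw.
  rewrite hvw big1 // => i _; have := h0 i isT; rewrite hKw => /eqP.
  by rewrite scaler_eq0 (negPf (e_ne0 hq0 _)) /= => /eqP.
have KiK : forall x, (Ks^-1)%VF (Ks x) = x.
  apply: lker0_lfunK; apply/lker0P => x y hxy; apply/eqP; rewrite -subr_eq0; apply/eqP.
  by apply: Kinj; rewrite fB hxy subrr.
have KKi : forall x, Ks ((Ks^-1)%VF x) = x.
  move=> x; apply: limg_lfunVK.
  have : x \in (\sum_(i < d.+1) W3 i)%VS by rewrite sum3 memvf.
  case/memv_sumP => w hw ->; apply: memv_suml => i _; apply/memv_imgP.
  exists ((q ^ ((2 * i)%:Z - d%:Z))^-1 *: w i); first exact: memvf.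
  by rewrite fZ (hK _ _ (ltn_ord i) (hw i isT)) scalerA mulVf ?scale1r // e_ne0.
have ID1 : (q - q^-1)^-1 *: (q *: (A \o Ks)%VF - q^-1 *: (Ks \o A)%VF) = a *: \1%VF.
  apply: (ext_on sum3) => i v hi; rewrite opE !comp_lfunE idE W3E memv_cap => /andP [h1 h2].
  exact: (piece1 hq0 hqn eA tA ha has hK' hi h1 h2).
have id1 : forall v, (q - q^-1)^-1 *: (q *: A (Ks v) - q^-1 *: Ks (A v)) = a *: v.
  by move=> v; have := congr1 (fun f : 'End(V) => f v) ID1; rewrite /= opE !comp_lfunE idE.
have ID3 : (q - q^-1)^-1 *: (q *: (As \o Ks^-1)%VF - q^-1 *: (Ks^-1 \o As)%VF) = as_ *: \1%VF.
  apply: (ext_on sum3) => i v hi; rewrite opE !comp_lfunE idE W3E memv_cap => /andP [h1 h2].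
  exact: (piece3 hq0 hqn tAs eAs ha has hK' KiK hi h1 h2).
have id3 : forall v,
    (q - q^-1)^-1 *: (q *: As ((Ks^-1)%VF v) - q^-1 *: (Ks^-1)%VF (As v)) = as_ *: v.
  by move=> v; have := congr1 (fun f : 'End(V) => f v) ID3; rewrite /= opE !comp_lfunE idE.
split => //.
- apply: (ext_on sum1) => i v hi; rewrite opE !comp_lfunE idE W1E // memv_cap => /andP [h1 h2].
  exact: (piece2 hq0 hqn eA eAs ha has KiK id1 id3 hB' hi h1 h2).
- apply: (ext_on sum2) => i v hi; rewrite opE !comp_lfunE idE W2E memv_cap => /andP [h1 h2].
  exact: (piece4 hq0 hqn eA eAs ha has KKi id1 id3 hBs' hi h1 h2).
Qed.
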